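(* Let $\sigma\in(0,1]$, let $x_1<\dots<x_N$, $J=[x_1,x_N]$, $T=\{1,\dots,N-1\}$, and let $f,b\in\mathcal{H}^\sigma(J)$ and $\alpha_k\in\mathcal{H}^\sigma(J)$ for all $k\in T$, with $b(x_1)=f(x_1)$, $b(x_N)=f(x_N)$, $b\neq f$ and $\max_{t\in J}|\alpha_k(t)|<1$ for each $k$. Let $c=\min\{a_k:k\in T\}$. If $\|\alpha\|_{\mathcal{H}}/c^\sigma<1$, then the $\alpha$-fractal function $f^\alpha$ is Hölder continuous with exponent $\sigma$.
   Context: $\mathcal{H}^\sigma(J)$ is the space of functions $h:J\to\mathbb{C}$ that are Hölder continuous with exponent $\sigma$, with norm $\|h\|_{\mathcal{H}}=\|h\|_\infty+[h]_\sigma$, $[h]_\sigma=\sup_{t_1\ne t_2}|h(t_1)-h(t_2)|/|t_1-t_2|^\sigma$. For the scaling vector $\alpha=(\alpha_1,\dots,\alpha_{N-1})$: $\|\alpha\|_\infty=\max_{k\in T}\sup_{t\in J}|\alpha_k(t)|$, $[\alpha]_\sigma=\max_{k\in T}\sup_{t_1\ne t_2\in J}|\alpha_k(t_1)-\alpha_k(t_2)|/|t_1-t_2|^\sigma$, $\|\alpha\|_{\mathcal{H}}=\|\alpha\|_\infty+[\alpha]_\sigma$. Construction: $J_k=[x_k,x_{k+1}]$, $P_k(t)=a_kt+d_k$ with $P_k(x_1)=x_k$, $P_k(x_N)=x_{k+1}$ (so $a_k=(x_{k+1}-x_k)/(x_N-x_1)$). The $\alpha$-fractal function $f^\alpha:J\to\mathbb{C}$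 is the unique continuous function whose graph is the attractor of the IFS $\{J\times\mathbb{C};W_k(t,y)=(P_k(t),\alpha_k(t)y+f(P_k(t))-\alpha_k(t)b(t)),\ k\in T\}$; equivalently it is the continuous function satisfying $f^\alpha(t)=f(t)+\alpha_k(P_k^{-1}(t))\,(f^\alpha-b)(P_k^{-1}(t))$ for $t\in J_k$, $k\in T$. *)

(* Defs.v *)
From HB Require Import structures.
From mathcomp Require Import all_boot all_order all_algebra.
From mathcomp Require Import all_classical all_reals.
From mathcomp Require Import topology normedtype exp.
From mathcomp Require Import complex.
Set Implicit Arguments. Unset Strict Implicit. Unset Printing Implicit Defensive.
Import Order.TTheory GRing.Theory Num.Theory.
Local Open Scope classical_set_scope.
Local Open Scope ring_scope.

Section FIF.
Variable R : realType.

Definition cmod (z : R[i]) : R := Normc.normc z.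

Definition Jint (x : nat -> R) (N : nat) : set R := [set t | x 1%N <= t <= x N].

Definition Tidx (N : nat) : set nat := [set k | (1 <= k < N)%N].

Definition holder (sigma : R) (J : set R) (h : R -> R[i]) : Prop :=
  exists K : R, forall t1 t2, J t1 -> J t2 ->
    cmod (h t1 - h t2) <= K * (`|t1 - t2| `^ sigma).

Definition acoef (x : nat -> R) (N k : nat) : R :=
  (x k.+1 - x k) / (x N - x 1%N).

(* P_k^{-1}(t), where P_k(t) = a_k t + d_k, P_k(x_1) = x_k *)
Definition Pinv (x : nat -> R) (N k : nat) (t : R) : R :=
  x 1%N + (t - x k) / acoef x N k.

Definition cmin (x : nat -> R) (N : nat) : R :=
  \big[Order.min/acoef x N 1%N]_(1 <= k < N) acoef x N k.

Definition alpha_sup (x : nat -> R) (N : nat) (alpha : nat -> R -> R[i]) : R :=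
  sup [set cmod (alpha k t) | k in Tidx N & t in Jint x N].

Definition alpha_semi (sigma : R) (x : nat -> R) (N : nat)
    (alpha : nat -> R -> R[i]) : R :=
  sup [set r | exists k t1 t2, [/\ Tidx N k, Jint x N t1, Jint x N t2, t1 != t2 &
        r = cmod (alpha k t1 - alpha k t2) / (`|t1 - t2| `^ sigma)]].

Definition alpha_H (sigma : R) x N alpha : R :=
  alpha_sup x N alpha + alpha_semi sigma x N alpha.

Definition cont_on (J : set R) (g : R -> R[i]) : Prop :=
  forall t, J t -> forall e : R, 0 < e -> exists2 d : R, 0 < d &
    forall s, J s -> `|s - t| < d -> cmod (g s - g t) < e.

Definition is_alpha_fractal (x : nat -> R) (N : nat) (f b : R -> R[i])
    (alpha : nat -> R -> R[i]) (g : R -> R[i]) : Prop :=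
  cont_on (Jint x N) g /\
  forall k, Tidx N k -> forall t, x k <= t <= x k.+1 ->
    g t = f t + alpha k (Pinv x N k t) * (g (Pinv x N k t) - b (Pinv x N k t)).

End FIF.

(* Main.v *)
Require Import Defs.
From HB Require Import structures.
From mathcomp Require Import all_boot all_order all_algebra.
From mathcomp Require Import all_classical all_reals.
From mathcomp Require Import topology normedtype exp.
From mathcomp Require Import complex.
From mathcomp Require Import ring lra.
Set Implicit Arguments. Unset Strict Implicit.
Import Order.TTheory GRing.Theory Num.Theory.
Local Open Scope classical_set_scope.
Local Open Scope ring_scope.
Lemma x_le (R : realType) (x : nat -> R) (N : nat) :
  (forall i, (1 <= i < N)%N -> x i < x i.+1) ->
  forall i j, (1 <= i)%N -> (i <= j)%N -> (j <= N)%N -> x i <= x j.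
Proof.
move=> Hx i j hi; elim: j => [|j IH] hij hjN; first by move: hi hij; case: i.
have [->|ne] := eqVneq i j.+1; first by [].
have hij' : (i <= j)%N by rewrite -ltnS ltn_neqAle ne hij.
apply: le_trans (IH hij' (ltnW hjN)) _; apply: ltW; apply: Hx.
by rewrite hjN (leq_trans hi hij').
Qed.

Lemma x_lt (R : realType) (x : nat -> R) (N : nat) :
  (forall i, (1 <= i < N)%N -> x i < x i.+1) ->
  forall i j, (1 <= i)%N -> (i < j)%N -> (j <= N)%N -> x i < x j.
Proof.
move=> Hx i [|j] hi hij hjN //; rewrite ltnS in hij.
apply: le_lt_trans (x_le Hx hi hij (ltnW hjN)) _; apply: Hx.
by rewrite hjN (leq_trans hi hij).
Qed.

Lemma acoef_gt0 (R : realType) (x : nat -> R) (N k : nat) :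
  (forall i, (1 <= i < N)%N -> x i < x i.+1) -> (1 <= k < N)%N ->
  0 < acoef x N k.
Proof.
move=> Hx /andP[k1 kN]; rewrite /acoef divr_gt0 // subr_gt0.
  by apply: Hx; rewrite k1 kN.
exact: (x_lt Hx (leqnn 1) (leq_ltn_trans k1 kN) (leqnn N)).
Qed.

Lemma acoef_le1 (R : realType) (x : nat -> R) (N k : nat) :
  (forall i, (1 <= i < N)%N -> x i < x i.+1) -> (1 <= k < N)%N ->
  acoef x N k <= 1.
Proof.
move=> Hx /andP[k1 kN]; have L0 : 0 < x N - x 1%N.
  by rewrite subr_gt0; exact: (x_lt Hx (leqnn 1) (leq_ltn_trans k1 kN) (leqnn N)).
rewrite /acoef ler_pdivrMr // mul1r.
have h1 := x_le Hx (leqnn 1) k1 (ltnW kN).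
have h2 := x_le Hx (leq_trans k1 (leqnSn k)) kN (leqnn N).
lra.
Qed.

Lemma bigmin_le_nat (R : realType) (a : nat -> R) (n k : nat) :
  (1 <= k < n)%N -> \big[Order.min/a 1%N]_(1 <= i < n) a i <= a k.
Proof.
move=> /andP[k1 kn]; apply: ge_bigmin_seq => //.
by rewrite mem_index_iota k1 kn.
Qed.

Lemma cmin_le (R : realType) (x : nat -> R) (N k : nat) :
  (1 <= k < N)%N -> cmin x N <= acoef x N k.
Proof. exact: bigmin_le_nat. Qed.

Lemma cmin_gt0 (R : realType) (x : nat -> R) (N : nat) :
  (forall i, (1 <= i < N)%N -> x i < x i.+1) -> (2 <= N)%N -> 0 < cmin x N.
Proof.
move=> Hx N2; rewrite /cmin big_seq; apply: (big_ind (fun v => 0 < v)).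
- by apply: acoef_gt0 => //.
- by move=> u v u0 v0; rewrite lt_min u0 v0.
- by move=> i; rewrite mem_index_iota => /andP[i1 iN]; apply: acoef_gt0 => //; rewrite i1.
Qed.
Lemma cmod_ge0 (R : realType) (z : R[i]) : 0 <= cmod z.
Proof. by case: z => a b; rewrite /cmod /= sqrtr_ge0. Qed.

Lemma cmodD (R : realType) (y z : R[i]) : cmod (y + z) <= cmod y + cmod z.
Proof. exact: le_normcD. Qed.

Lemma cmodM (R : realType) (y z : R[i]) : cmod (y * z) = cmod y * cmod z.
Proof. exact: Normc.normcM. Qed.

Lemma cmodBC (R : realType) (y z : R[i]) : cmod (y - z) = cmod (z - y).
Proof. by rewrite /cmod -opprB normcN. Qed.

Lemma cmodB (R : realType) (y z : R[i]) : cmod y <= cmod (y - z) + cmod z.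
Proof. by have := cmodD (y - z) z; rewrite subrK. Qed.

Lemma cont_bounded (R : realType) (a b : R) (g : R -> R[i]) : a <= b ->
  cont_on [set t | a <= t <= b] g ->
  exists M, forall t, a <= t <= b -> cmod (g t) <= M.
Proof.
move=> ab Hc.
set B := [set s | a <= s <= b /\ exists M, forall t, a <= t <= s -> cmod (g t) <= M].
have Ba : B a.
  split; first by rewrite lexx ab.
  by exists (cmod (g a)) => t /andP[h1 h2]; have -> : t = a by apply/eqP; rewrite eq_le h1 h2.
have ubB : ubound B b by move=> s [/andP[_ ->]].
have hsB : has_sup B by split; [exists a | exists b].
set s := sup B.
have as_ : a <= s by apply: ub_le_sup => //; exists b.
have sb : s <= b by apply: ge_sup => //; exists a.
have sJ : a <= s <= b by rewrite as_ sb.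
have [d d0 Hd] := Hc s sJ 1 ltr01.
have h2 : 0 < d / 2 by rewrite divr_gt0.
have [s' Bs' ls'] := sup_adherent h2 hsB.
have s's : s' <= s by apply: ub_le_sup => //; exists b.
have claim : forall r, s <= r <= s + d / 2 -> r <= b -> B r.
  move=> r /andP[r1 r2] rb; split; first by rewrite rb (le_trans as_ r1).
  case: Bs' => _ [M' HM'].
  exists (Num.max M' (cmod (g s) + 1)) => t /andP[ta tr].
  have [ts'|ts'] := lerP t s'.
    by rewrite le_max HM' // ta ts'.
  rewrite le_max; apply/orP; right.
  have tJ : a <= t <= b by rewrite ta (le_trans tr rb).
  have : `|t - s| < d.
    rewrite ltr_norml; apply/andP; split.
      move: ls'; rewrite -/s; lra.
    lra.
  move/(Hd t tJ) => h.
  apply: le_trans (cmodB (g t) (g s)) _; lra.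
have [bl|bg] := lerP b (s + d / 2).
  have sbb : s <= b <= s + d / 2 by rewrite sb bl.
  have [_ [M HM]] := claim b sbb (lexx b).
  by exists M.
have sr : s <= s + d / 2 <= s + d / 2 by apply/andP; split; lra.
have H1 := claim _ sr (ltW bg).
have : s + d / 2 <= s by apply: ub_le_sup => //; exists b.
lra.
Qed.

Lemma unif_bound (R : realType) (Q : nat -> R -> Prop) (N : nat) :
  (forall k K K', Q k K -> K <= K' -> Q k K') ->
  (forall k, (1 <= k < N)%N -> exists K, 0 <= K /\ Q k K) ->
  exists K, 0 <= K /\ forall k, (1 <= k < N)%N -> Q k K.
Proof.
move=> Hm; elim: N => [|N IH] H.
  by exists 0; split => // k /andP[_].
have [K1 [K10 HK1]] : exists K, 0 <= K /\ forall k, (1 <= k < N)%N -> Q k K.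
  apply: IH => k /andP[k1 kN]; apply: H; rewrite k1 /=; exact: ltnW.
have [N0|N1] := posnP N.
  exists K1; split => // k /andP[k1]; rewrite N0 ltnS => k0.
  by move: k1; rewrite leqNgt ltnS k0.
have [K2 [K20 HK2]] := H N (andb_true_intro (conj N1 (ltnSn N))).
exists (Num.max K1 K2); split; first by rewrite le_max K10.
move=> k /andP[k1]; rewrite ltnS leq_eqVlt => /orP[/eqP->|kN].
  by apply: Hm HK2 _; rewrite le_max lexx orbT.
by apply: Hm (HK1 k _) _; [rewrite k1 kN | rewrite le_max lexx].
Qed.

Lemma holder_nonneg (R : realType) sigma (J : set R) h : holder sigma J h ->
  exists K, 0 <= K /\ forall t1 t2, J t1 -> J t2 ->
    cmod (h t1 - h t2) <= K * (`|t1 - t2| `^ sigma).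
Proof.
move=> [K HK]; exists (Num.max K 0); split; first by rewrite le_max lexx orbT.
move=> t1 t2 J1 J2; apply: le_trans (HK _ _ J1 J2) _.
by rewrite ler_wpM2r ?powR_ge0 // le_max lexx.
Qed.

Lemma holder_bnd (R : realType) sigma (x : nat -> R) N h : 0 <= sigma ->
  x 1%N <= x N -> holder sigma (Jint x N) h ->
  exists M, forall t, Jint x N t -> cmod (h t) <= M.
Proof.
move=> s0 xl /holder_nonneg [K [K0 HK]].
exists (cmod (h (x 1%N)) + K * (x N - x 1%N) `^ sigma) => t Jt.
have J1 : Jint x N (x 1%N) by rewrite /Jint /= lexx xl.
apply: le_trans (cmodB _ (h (x 1%N))) _; rewrite addrC lerD2l.
apply: le_trans (HK _ _ Jt J1) _; rewrite ler_wpM2l //.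
apply: ge0_ler_powR => //; rewrite ?nnegrE ?subr_ge0 //.
move: Jt; rewrite /Jint /= => /andP[t1 t2].
by rewrite ger0_norm ?subr_ge0 // lerD2r.
Qed.
Lemma trunc_sup (R : realType) (P : R -> R -> Prop) (phi : R -> R -> R) (sigma A rho M : R) :
 0 <= sigma -> 0 <= rho < 1 ->
 (forall s t, P s t -> 0 <= phi s t <= M) ->
 (forall h s0, 0 < h -> 0 <= s0 ->
    (forall s t, P s t -> h <= `|s - t| -> phi s t <= s0 * `|s - t| `^ sigma) ->
    forall s t, P s t -> h <= `|s - t| -> phi s t <= (A + rho*s0) * `|s - t| `^ sigma) ->
 forall s t, P s t -> s != t -> phi s t <= A/(1-rho) * `|s - t| `^ sigma.
Proof.
move=> s0 /andP[r0 r1] Hb H s t Pst st.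
set h := `|s - t|.
have h0 : 0 < h by rewrite normr_gt0 subr_eq0.
have ph0 : 0 < h `^ sigma by rewrite powR_gt0.
set S := [set q | exists s' t', [/\ P s' t', h <= `|s' - t'| & q = phi s' t' / `|s' - t'| `^ sigma]].
have SS : S (phi s t / h `^ sigma) by exists s, t.
have M0 : 0 <= M by have /andP[a b] := Hb _ _ Pst; exact: le_trans b.
have ubS : has_ubound S.
  exists (M / h `^ sigma) => q [s' [t' [P' hd ->]]].
  have hd0 : 0 < `|s' - t'| by exact: lt_le_trans hd.
  have p0 : 0 < `|s' - t'| `^ sigma by rewrite powR_gt0.
  have hp : h `^ sigma <= `|s' - t'| `^ sigma.
    by apply: ge0_ler_powR => //; rewrite nnegrE ltW.
  have /andP[a b] := Hb _ _ P'.
  apply: (@le_trans _ _ (M / `|s' - t'| `^ sigma)).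
    by rewrite ler_pM2r ?invr_gt0.
  by rewrite ler_wpM2l // lef_pV2 ?posrE.
have supge : forall q, S q -> q <= sup S by move=> q Sq; exact: ub_le_sup.
have sup0 : 0 <= sup S.
  apply: le_trans (supge _ SS).
  by have /andP[a _] := Hb _ _ Pst; rewrite divr_ge0 // ltW.
have key : forall s' t', P s' t' -> h <= `|s' - t'| -> phi s' t' <= sup S * `|s' - t'| `^ sigma.
  move=> s' t' P' hd.
  have p0 : 0 < `|s' - t'| `^ sigma by rewrite powR_gt0 // (lt_le_trans h0).
  rewrite -ler_pdivrMr //; apply: supge; by exists s', t'.
have H2 := H h (sup S) h0 sup0 key.
have le1 : sup S <= A + rho * sup S.
  apply: ge_sup; first by exists (phi s t / h `^ sigma).
  move=> q [s' [t' [P' hd ->]]].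
  have p0 : 0 < `|s' - t'| `^ sigma by rewrite powR_gt0 // (lt_le_trans h0).
  by rewrite ler_pdivrMr //; apply: H2.
have le2 : sup S <= A / (1 - rho).
  rewrite ler_pdivlMr ?subr_gt0 //. lra.
apply: le_trans (key _ _ Pst (lexx _)) _.
by rewrite ler_wpM2r // ?powR_ge0.
Qed.
Lemma locate (R : realType) (x : nat -> R) (N : nat) (s : R) :
  (forall i, (1 <= i < N)%N -> x i < x i.+1) -> (2 <= N)%N ->
  x 1%N <= s <= x N -> exists k, (1 <= k < N)%N /\ x k <= s <= x k.+1.
Proof.
move=> Hx N2 sJ.
suff H : forall n, (2 <= n <= N)%N -> s <= x n -> exists k, (1 <= k < n)%N /\ x k <= s <= x k.+1.
  have [k [/andP[k1 kN] hk]] := H N (andb_true_intro (conj N2 (leqnn N))) (proj2 (andP sJ)).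
  by exists k; rewrite k1 kN.
elim => [|n IH] // /andP[n2 nN] sn.
have [n1|n1] := leqP n 1.
  exists 1%N; split; first by apply: leq_trans n2.
  have e1 : n = 1%N by apply/eqP; rewrite eqn_leq n1 -ltnS.
  by rewrite e1 in sn; rewrite sn (proj1 (andP sJ)).
have [sxn|sxn] := lerP s (x n).
  have [k [/andP[k1 kn] hk]] := IH (andb_true_intro (conj n1 (ltnW nN))) sxn.
  by exists k; rewrite k1 (ltn_trans kn (ltnSn n)).
exists n; split; first by rewrite (ltnW n1) ltnSn.
by rewrite (ltW sxn) sn.
Qed.
Unset Implicit Arguments.
Set Strict Implicit.

Theorem mainTheorem7 (R : realType) (sigma : R) (N : nat) (x : nat -> R)
    (f b : R -> R[i]) (alpha : nat -> R -> R[i]) (g : R -> R[i]) :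
  0 < sigma <= 1 ->
  (2 <= N)%N ->
  (forall i, (1 <= i < N)%N -> x i < x i.+1) ->
  holder sigma (Jint x N) f ->
  holder sigma (Jint x N) b ->
  (forall k, Tidx N k -> holder sigma (Jint x N) (alpha k)) ->
  b (x 1%N) = f (x 1%N) ->
  b (x N) = f (x N) ->
  (exists t, Jint x N t /\ b t <> f t) ->
  (forall k, Tidx N k -> sup [set cmod (alpha k t) | t in Jint x N] < 1) ->
  alpha_H sigma x N alpha / (cmin x N `^ sigma) < 1 ->
  is_alpha_fractal x N f b alpha g ->
  holder sigma (Jint x N) g.
Proof.
move=> /andP[sg0 sg1] N2 Hx Hf Hb Ha _ _ _ _ hH [Hgc Hfe].
have sg0' : 0 <= sigma by exact: ltW.
have N1 : (1 < N)%N by [].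
have x1N : x 1%N < x N by exact: (x_lt Hx (leqnn 1) N1 (leqnn N)).
set L := x N - x 1%N.
have L0 : 0 < L by rewrite subr_gt0.
set J := Jint x N.
have J1 : J (x 1%N) by rewrite /J /Jint /= lexx ltW.
have JN : J (x N) by rewrite /J /Jint /= lexx ltW.
set c := cmin x N.
have c0 : 0 < c by exact: cmin_gt0.
have cle : forall k, (1 <= k < N)%N -> c <= acoef x N k by move=> k; exact: cmin_le.
have cs0 : 0 < c `^ sigma by rewrite powR_gt0.
have [G HG] := cont_bounded (ltW x1N) Hgc.
have [Gb HGb] := holder_bnd sg0' (ltW x1N) Hb.
have [Kf [Kf0 HKf]] := holder_nonneg Hf.
have [Kb [Kb0 HKb]] := holder_nonneg Hb.
have [Ka [Ka0 HKa]] : exists K, 0 <= K /\ forall k, (1 <= k < N)%N ->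
    forall t1 t2, J t1 -> J t2 -> cmod (alpha k t1 - alpha k t2) <= K * (`|t1 - t2| `^ sigma).
  apply: (unif_bound (Q := fun k K => forall t1 t2, J t1 -> J t2 ->
      cmod (alpha k t1 - alpha k t2) <= K * (`|t1 - t2| `^ sigma))).
    move=> k K K' HK KK' t1 t2 J1' J2'; apply: le_trans (HK _ _ J1' J2') _.
    by rewrite ler_wpM2r ?powR_ge0.
  by move=> k hk; apply: holder_nonneg; apply: Ha.
have [Ma [Ma0 HMa]] : exists M, 0 <= M /\ forall k, (1 <= k < N)%N ->
    forall t, J t -> cmod (alpha k t) <= M.
  apply: (unif_bound (Q := fun k M => forall t, J t -> cmod (alpha k t) <= M)).
    by move=> k K K' HK KK' t Jt; apply: le_trans (HK _ Jt) _.
  move=> k hk; have [M HM] := holder_bnd sg0' (ltW x1N) (Ha k hk).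
  exists (Num.max M 0); split; first by rewrite le_max lexx orbT.
  by move=> t Jt; apply: le_trans (HM t Jt) _; rewrite le_max lexx.
set lam := alpha_sup x N alpha.
have Hlam : forall k, (1 <= k < N)%N -> forall t, J t -> cmod (alpha k t) <= lam.
  move=> k hk t Jt; rewrite /lam /alpha_sup; apply: ub_le_sup.
    exists Ma => z [k' hk' [t' Jt' <-]]; exact: HMa.
  by exists k => //; exists t.
have lam0 : 0 <= lam.
  by apply: le_trans (Hlam 1%N _ _ J1); [rewrite cmod_ge0 | rewrite /= N1].
have semi0 : 0 <= alpha_semi sigma x N alpha.
  rewrite /alpha_semi.
  set S' := [set r | _].
  have [hs|nhs] := pselect (has_sup S'); last by rewrite sup_out.
  have S'0 : S' (cmod (alpha 1%N (x 1%N) - alpha 1%N (x N)) / (`|x 1%N - x N| `^ sigma)).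
    by exists 1%N, (x 1%N), (x N); split => //; rewrite lt_eqF.
  apply: le_trans (ub_le_sup (proj2 hs) S'0).
  by rewrite divr_ge0 ?cmod_ge0 ?powR_ge0.
set rho := lam / c `^ sigma.
have rho0 : 0 <= rho by rewrite divr_ge0 // ltW.
have rho1 : rho < 1.
  apply: le_lt_trans hH; rewrite ler_pM2r ?invr_gt0 // /alpha_H -/lam; lra.
have Hk : forall k, (1 <= k < N)%N ->
    [/\ 0 < acoef x N k, acoef x N k <= 1, x k < x k.+1, x 1%N <= x k & x k.+1 <= x N].
  move=> k hk; have /andP[k1 kN] := hk; split.
  - exact: acoef_gt0.
  - exact: acoef_le1.
  - exact: Hx.
  - exact: (x_le Hx (leqnn 1%N) k1 (ltnW kN)).
  - exact: (x_le Hx (ltn0Sn k) kN (leqnn N)).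
have aL : forall k, (1 <= k < N)%N -> acoef x N k * L = x k.+1 - x k.
  by move=> k hk; rewrite /acoef divfK // gt_eqF.
have PJ : forall k, (1 <= k < N)%N -> forall t, x k <= t <= x k.+1 -> J (Pinv x N k t).
  move=> k hk t /andP[t1 t2]; have [a0 a1 xk xk1 xkN] := Hk k hk.
  have := aL k hk; rewrite /J /Jint /Pinv /= => aLk.
  have q0 : 0 <= (t - x k) / acoef x N k by rewrite divr_ge0 ?subr_ge0 // ltW.
  have q1 : (t - x k) / acoef x N k <= L.
    by rewrite ler_pdivrMr // mulrC aLk lerD2r.
  apply/andP; split; rewrite /L in q1; lra.
have Pd : forall k, (1 <= k < N)%N -> forall t1 t2,
    Pinv x N k t1 - Pinv x N k t2 = (t1 - t2) / acoef x N k.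
  by move=> k hk t1 t2; rewrite /Pinv; ring.
have P1 : forall k, (1 <= k < N)%N -> Pinv x N k (x k) = x 1%N.
  by move=> k hk; rewrite /Pinv subrr mul0r addr0.
have PN : forall k, (1 <= k < N)%N -> Pinv x N k (x k.+1) = x N.
  move=> k hk; have [a0 _ _ _ _] := Hk k hk; rewrite /Pinv -(aL k hk) mulrC mulKf ?gt_eqF //.
  by rewrite /L addrC subrK.
have Pdist : forall k, (1 <= k < N)%N -> forall t1 t2,
    `|Pinv x N k t1 - Pinv x N k t2| = `|t1 - t2| / acoef x N k.
  move=> k hk t1 t2; have [a0 _ _ _ _] := Hk k hk.
  by rewrite Pd // normrM normfV (gtr0_norm a0).
have Pge : forall k, (1 <= k < N)%N -> forall t1 t2,
    `|t1 - t2| <= `|Pinv x N k t1 - Pinv x N k t2|.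
  move=> k hk t1 t2; have [a0 a1 _ _ _] := Hk k hk.
  by rewrite Pdist // ler_pdivlMr // ler_piMr.
have Ppow : forall k, (1 <= k < N)%N -> forall t1 t2,
    `|Pinv x N k t1 - Pinv x N k t2| `^ sigma <= `|t1 - t2| `^ sigma / c `^ sigma.
  move=> k hk t1 t2; have [a0 a1 _ _ _] := Hk k hk.
  have e : `|Pinv x N k t1 - Pinv x N k t2| `^ sigma * acoef x N k `^ sigma = `|t1 - t2| `^ sigma.
    have an : acoef x N k != 0 by rewrite gt_eqF.
    have dn : 0 <= `|t1 - t2| / acoef x N k by rewrite divr_ge0 // ltW.
    by rewrite Pdist // -powRM ?(divfK an) // ltW.
  rewrite -e ler_pdivlMr // ler_wpM2l ?powR_ge0 //.
  apply: ge0_ler_powR => //; rewrite ?nnegrE ?(ltW c0) ?(ltW a0) //; exact: cle.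
have G0 : 0 <= G by apply: le_trans (HG _ J1); exact: cmod_ge0.
have Gb0 : 0 <= Gb by apply: le_trans (HGb _ J1); exact: cmod_ge0.
set C1 := lam * Kb + Ka * (G + Gb).
have C10 : 0 <= C1 by rewrite /C1 addr_ge0 // mulr_ge0 // addr_ge0.
set A0 := Kf + C1 / c `^ sigma.
have A00 : 0 <= A0 by rewrite /A0 addr_ge0 // divr_ge0 // ltW.
have JkJ : forall k, (1 <= k < N)%N -> forall t, x k <= t <= x k.+1 -> J t.
  move=> k hk t /andP[t1 t2]; have [_ _ _ h1 h2] := Hk k hk.
  by rewrite /J /Jint /= (le_trans h1 t1) (le_trans t2 h2).
have SI2 : forall k, (1 <= k < N)%N -> forall t1 t2,
    x k <= t1 <= x k.+1 -> x k <= t2 <= x k.+1 -> forall s0, 0 <= s0 ->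
    cmod (g (Pinv x N k t1) - g (Pinv x N k t2)) <=
      s0 * `|Pinv x N k t1 - Pinv x N k t2| `^ sigma ->
    cmod (g t1 - g t2) <= (A0 + rho * s0) * `|t1 - t2| `^ sigma.
  move=> k hk t1 t2 h1 h2 s0 s00 Hs0.
  have hk' : Tidx N k by [].
  rewrite (Hfe k hk' t1 h1) (Hfe k hk' t2 h2).
  set u1 := Pinv x N k t1; set u2 := Pinv x N k t2.
  have Ju1 : J u1 by exact: PJ.
  have Ju2 : J u2 by exact: PJ.
  have Jt1 : J t1 by exact: JkJ h1.
  have Jt2 : J t2 by exact: JkJ h2.
  set p := `|t1 - t2| `^ sigma.
  set q := `|u1 - u2| `^ sigma.
  have hq : q <= p / c `^ sigma by exact: Ppow.
  have p0 : 0 <= p by exact: powR_ge0.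
  have q0 : 0 <= q by exact: powR_ge0.
  set a1 := alpha k u1; set a2 := alpha k u2.
  have -> : f t1 + a1 * (g u1 - b u1) - (f t2 + a2 * (g u2 - b u2)) =
     (f t1 - f t2) + a1 * (g u1 - g u2) + a1 * (b u2 - b u1) + (a1 - a2) * (g u2 - b u2).
    by ring.
  have e1 : cmod (f t1 - f t2) <= Kf * p by exact: HKf.
  have ea : cmod a1 <= lam by exact: Hlam.
  have e2 : cmod (a1 * (g u1 - g u2)) <= lam * (s0 * q).
    rewrite cmodM; apply: ler_pM => //; exact: cmod_ge0.
  have e3 : cmod (a1 * (b u2 - b u1)) <= lam * (Kb * q).
    rewrite cmodM cmodBC; apply: ler_pM => //; try exact: cmod_ge0.
    exact: HKb.
  have e4 : cmod ((a1 - a2) * (g u2 - b u2)) <= (Ka * q) * (G + Gb).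
    rewrite cmodM; apply: ler_pM; try exact: cmod_ge0.
      exact: HKa.
    apply: le_trans (cmodD _ _) _; rewrite /cmod normcN.
    by apply: lerD; [exact: HG | exact: HGb].
  have w1 := cmodD (f t1 - f t2 + a1 * (g u1 - g u2) + a1 * (b u2 - b u1))
     ((a1 - a2) * (g u2 - b u2)).
  have w2 := cmodD (f t1 - f t2 + a1 * (g u1 - g u2)) (a1 * (b u2 - b u1)).
  have w3 := cmodD (f t1 - f t2) (a1 * (g u1 - g u2)).
  have f1 : lam * s0 * q <= lam * s0 * (p / c `^ sigma).
    by rewrite ler_wpM2l // mulr_ge0.
  have f2 : C1 * q <= C1 * (p / c `^ sigma) by rewrite ler_wpM2l.
  have -> : (A0 + rho * s0) * p = Kf * p + C1 * (p / c `^ sigma) + lam * s0 * (p / c `^ sigma).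
    by rewrite /A0 /rho; ring.
  rewrite /C1 in f2 *.
  lra.
set C0 := 2 * G / (c * L) `^ sigma.
have cL0 : 0 < (c * L) `^ sigma by rewrite powR_gt0 // mulr_gt0.
have C00 : 0 <= C0 by rewrite /C0 divr_ge0 ?mulr_ge0 // ltW.
have g2 : forall s t, J s -> J t -> 0 <= cmod (g s - g t) <= 2 * G.
  move=> s t Js Jt; rewrite cmod_ge0 /=.
  apply: le_trans (cmodD _ _) _; rewrite /cmod normcN.
  have := HG s Js; have := HG t Jt; rewrite /cmod; lra.
have far : forall s t, J s -> J t -> c * L <= `|s - t| ->
    cmod (g s - g t) <= C0 * `|s - t| `^ sigma.
  move=> s t Js Jt hst; have /andP[_ h2] := g2 s t Js Jt.
  apply: le_trans h2 _.
  rewrite /C0 mulrAC ler_pdivlMr // ler_wpM2l ?mulr_ge0 //.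
  by apply: ge0_ler_powR => //; rewrite nnegrE mulr_ge0 // ltW.
have cLk : forall k, (1 <= k < N)%N -> c * L <= x k.+1 - x k.
  by move=> k hk; rewrite -(aL k hk) ler_pM2r //; exact: cle.
have powle : forall u v : R, `|u| <= `|v| -> `|u| `^ sigma <= `|v| `^ sigma.
  by move=> u v uv; apply: (ge0_ler_powR sg0'); rewrite ?nnegrE.
have fin : forall K s0 p, 0 <= K -> 0 <= s0 -> 0 <= p -> forall B, 0 <= B ->
    K * p <= (K + B + rho * s0) * p.
  move=> K s0 p K0 s00 p0 B B0; rewrite ler_wpM2r // -addrA lerDl addr_ge0 //.
  exact: mulr_ge0.
set m := N.-1.
have em : m.+1 = N by rewrite /m prednK // ltnW.
have hm : (1 <= m < N)%N by rewrite -em ltnSn andbT -ltnS em.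
have h1 : (1 <= 1 < N)%N by [].
set K1 := (A0 + C0) / (1 - rho).
have K10 : 0 <= K1.
  by apply: divr_ge0; [exact: addr_ge0 | rewrite subr_ge0 ltW].
have S1 : forall s e, J s -> (e = x 1%N \/ e = x N) ->
    cmod (g s - g e) <= K1 * `|s - e| `^ sigma.
  move=> s e Js He.
  have [->|se] := eqVneq s e.
    by rewrite subrr /cmod Normc.normc0 mulr_ge0 ?powR_ge0.
  apply: (@trunc_sup R (fun s e => J s /\ (e = x 1%N \/ e = x N))
     (fun s e => cmod (g s - g e)) sigma (A0 + C0) rho (2 * G)) => //.
  - by rewrite rho0 rho1.
  - by move=> s' e' [Js' [->|->]]; apply: g2.
  move=> h s0 h0 s00 IH s' e' [Js' [->|->]] hd.
  - have [sx2|sx2] := lerP s' (x 2%N).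
      have hs1 : x 1%N <= s' <= x 1%N.+1 by move: Js'; rewrite /J /Jint /= => /andP[-> _].
      have hx1 : x 1%N <= x 1%N <= x 1%N.+1 by rewrite lexx ltW //; apply: Hx.
      apply: le_trans (SI2 1%N h1 _ _ hs1 hx1 s0 s00 _) _.
        rewrite P1 //; apply: IH; first by split => //; [exact: PJ | by left].
        apply: le_trans hd _; rewrite -{2}(P1 1%N h1); exact: Pge.
      rewrite ler_wpM2r ?powR_ge0 // lerD2r lerDl //.
    apply: le_trans (far _ _ Js' J1 _) _.
      apply: le_trans (cLk 1%N h1) _; rewrite ger0_norm ?subr_ge0.
        by rewrite lerD2r ltW.
      by move: Js'; rewrite /J /Jint /= => /andP[].
    by rewrite (addrC A0 C0); apply: fin => //; exact: powR_ge0.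
  - have [sxm|sxm] := lerP (x m) s'.
      have PNm : Pinv x N m (x N) = x N by have := PN m hm; rewrite em.
      have hs1 : x m <= s' <= x m.+1 by move: Js'; rewrite /J /Jint /= em sxm => /andP[_ ->].
      have hxN : x m <= x N <= x m.+1 by rewrite em lexx ltW //; rewrite -em; apply: Hx.
      apply: le_trans (SI2 m hm _ _ hs1 hxN s0 s00 _) _.
        rewrite PNm; apply: IH; first by split => //; [exact: PJ | by right].
        apply: le_trans hd _; have := Pge m hm s' (x N); rewrite PNm; exact.
      rewrite ler_wpM2r ?powR_ge0 // lerD2r lerDl //.
    apply: le_trans (far _ _ Js' JN _) _.
      apply: le_trans (cLk m hm) _; rewrite distrC ger0_norm ?subr_ge0.
        by rewrite em lerD2l lerN2 ltW.
      by move: Js'; rewrite /J /Jint /= => /andP[].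
    by rewrite (addrC A0 C0); apply: fin => //; exact: powR_ge0.
set A2 := A0 + C0 + 2 * (A0 + rho * K1).
have rK : 0 <= rho * K1 by exact: mulr_ge0.
have A20 : 0 <= A2.
  rewrite /A2; apply: addr_ge0; first exact: addr_ge0.
  by apply: mulr_ge0 => //; exact: addr_ge0.
set K2 := A2 / (1 - rho).
have K20 : 0 <= K2.
  by apply: divr_ge0; [exact: A20 | rewrite subr_ge0 ltW].
exists K2 => s t Js Jt.
have [->|st] := eqVneq s t.
  by rewrite subrr /cmod Normc.normc0 mulr_ge0 ?powR_ge0.
apply: (@trunc_sup R (fun s t => J s /\ J t)
   (fun s t => cmod (g s - g t)) sigma A2 rho (2 * G)) => //.
- by rewrite rho0 rho1.
- by move=> s' t' [Js' Jt']; apply: g2.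
move=> h s0 h0 s00 IH s' t' [Js' Jt'].
wlog le_st : s' t' Js' Jt' / s' <= t'.
  move=> W hd; case/orP: (le_total s' t') => le.
    exact: (W s' t' Js' Jt' le hd).
  rewrite cmodBC distrC; apply: (W t' s' Jt' Js' le).
  by rewrite distrC.
move=> hd.
have [k [hk /andP[xks sxk]]] := locate Hx N2 Js'.
have [a0 a1 xk1 xk xkN] := Hk k hk.
have pp : 0 <= `|s' - t'| `^ sigma by exact: powR_ge0.
have [txk|txk] := lerP t' (x k.+1).
  have hs : x k <= s' <= x k.+1 by rewrite xks sxk.
  have ht : x k <= t' <= x k.+1 by rewrite txk (le_trans xks le_st).
  apply: le_trans (SI2 k hk _ _ hs ht s0 s00 _) _.
    apply: IH; first by split; exact: PJ.
    by apply: le_trans hd _; exact: Pge.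
  by rewrite ler_wpM2r // lerD2r /A2 -addrA lerDl addr_ge0 // mulr_ge0 // addr_ge0 // mulr_ge0.
have /andP[_ tN] : J t' by [].
have hk1 : (1 <= k.+1 < N)%N.
  rewrite ltn0Sn /= ltn_neqAle; move: hk => /andP[_ ->]; rewrite andbT.
  apply/eqP => ekN; move: txk; rewrite ekN; lra.
have [a0' a1' xk1' xk' xkN'] := Hk k.+1 hk1.
have [txk2|txk2] := lerP t' (x k.+2).
  set z := x k.+1.
  have Jz : J z by apply: (JkJ k hk); rewrite lexx ltW.
  have hs : x k <= s' <= x k.+1 by rewrite xks sxk.
  have hz : x k <= z <= x k.+1 by rewrite lexx ltW.
  have hz' : x k.+1 <= z <= x k.+2 by rewrite lexx ltW.
  have ht : x k.+1 <= t' <= x k.+2 by rewrite txk2 ltW.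
  have E1 : cmod (g s' - g z) <= (A0 + rho * K1) * `|s' - z| `^ sigma.
    apply: (SI2 k hk _ _ hs hz K1 K10).
    rewrite /z PN //; apply: (S1); [exact: PJ | by right].
  have E2 : cmod (g z - g t') <= (A0 + rho * K1) * `|z - t'| `^ sigma.
    apply: (SI2 k.+1 hk1 _ _ hz' ht K1 K10).
    have -> : Pinv x N k.+1 z = x 1%N by exact: P1.
    rewrite cmodBC distrC; apply: (S1); [exact: PJ | by left].
  have hsz : s' <= z by [].
  have hzt : z <= t' by exact: ltW.
  have n1 : `|s' - z| = z - s' by rewrite distrC ger0_norm // subr_ge0.
  have n2 : `|s' - t'| = t' - s' by rewrite distrC ger0_norm // subr_ge0.
  have n3 : `|z - t'| = t' - z by rewrite distrC ger0_norm // subr_ge0.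
  have d1 : `|s' - z| `^ sigma <= `|s' - t'| `^ sigma.
    by apply: powle; rewrite n1 n2; lra.
  have d2 : `|z - t'| `^ sigma <= `|s' - t'| `^ sigma.
    by apply: powle; rewrite n3 n2; lra.
  have Ar : 0 <= A0 + rho * K1 by rewrite addr_ge0 // mulr_ge0.
  have E1' := ler_wpM2l Ar d1.
  have E2' := ler_wpM2l Ar d2.
  have w := cmodD (g s' - g z) (g z - g t').
  rewrite (_ : g s' - g z + (g z - g t') = g s' - g t') in w; last by ring.
  have rs : 0 <= rho * s0 by exact: mulr_ge0.
  have e3 : 0 <= (A0 + C0) * `|s' - t'| `^ sigma by rewrite mulr_ge0 // addr_ge0.
  have e4 : 0 <= rho * s0 * `|s' - t'| `^ sigma by rewrite mulr_ge0.
  have -> : (A2 + rho * s0) * `|s' - t'| `^ sigma = (A0 + C0) * `|s' - t'| `^ sigma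
     + 2 * ((A0 + rho * K1) * `|s' - t'| `^ sigma) + rho * s0 * `|s' - t'| `^ sigma.
    by rewrite /A2; ring.
  lra.
apply: le_trans (far _ _ Js' Jt' _) _.
  apply: le_trans (cLk k.+1 hk1) _; rewrite distrC ger0_norm ?subr_ge0 //.
  by rewrite lerD ?lerN2 // ltW.
have -> : A2 = C0 + (A0 + 2 * (A0 + rho * K1)) by rewrite /A2; ring.
apply: fin => //; rewrite addr_ge0 // mulr_ge0 // addr_ge0 // mulr_ge0.
Qed.
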